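(* Let $B,C\in\mathcal{H}$ and let $\beta\in\underline{\mathcal{H}}(B,C)$ be a cokernel morphism in $\underline{\mathcal{H}}$, i.e. there is a morphism $f\in\mathscr{C}(A,B)$ with $A\in\mathcal{H}$ such that $\beta$ is a cokernel of $\underline{f}$ in $\underline{\mathcal{H}}$. Then there exist an object $C'\in\mathcal{H}$, a morphism $g\in\mathscr{C}(B,C')$ and an isomorphism $\eta\in\underline{\mathcal{H}}(C,C')$ such that (i) $\eta\circ\beta=\underline{g}$, and (ii) there is a distinguished triangle $S[-1]\overset{s}{\to}B\overset{g}{\to}C'\to S$ with $S\in\mathcal{S}$.
   Context: $\mathscr{C}$ is a triangulated category with shift $[1]$; subcategories are full, additive, closed under isomorphisms and direct summands. $\mathrm{Ext}^1(X,Y)=\mathscr{C}(X,Y[1])$. $\mathcal{M}\ast\mathcal{N}$ is the full subcategory of objects $C$ admitting a distinguished triangle $M\to C\to N\to M[1]$ with $M\in\mathcal{M}$, $N\in\mathcal{N}$. A cotorsion pair $(\mathcal{U},\mathcal{V})$: $\mathrm{Ext}^1(\mathcal{U},\mathcal{V})=0$ and $\mathscr{C}=\mathcal{U}\ast\mathcal{V}[1]$. Fix a twin cotorsion pair, i.e. cotorsion pairs $(\mathcal{S},\mathcal{T}),(\mathcal{U},\mathcal{V})$ with $\mathrm{Ext}^1(\mathcal{S},\mathcal{V})=0$. Put $\mathcal{W}=\mathcal{T}\cap\mathcal{U}$, $\mathscr{C}^-=\mathcal{S}[-1]\ast\mathcal{W}$, $\mathscr{C}^+=\mathcal{W}\ast\mathcal{V}[1]$,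 $\mathcal{H}=\mathscr{C}^+\cap\mathscr{C}^-$. $\underline{\mathcal{H}}$ is the ideal quotient of $\mathcal{H}$ by morphisms factoring through objects of $\mathcal{W}$, and $\underline{f}$ is the image of $f$. ($\underline{\mathcal{H}}$ is preabelian, so cokernels exist.) *)

(* Defs.v *)
From HB Require Import structures.
From mathcomp Require Import all_boot all_algebra.
Set Implicit Arguments. Unset Strict Implicit. Unset Printing Implicit Defensive.
Import GRing.Theory.
Local Open Scope ring_scope.

Record tcat := TCat {
  Ob : Type;
  Mor : Ob -> Ob -> zmodType;
  compm : forall X Y Z : Ob, Mor Y Z -> Mor X Y -> Mor X Z;
  idm : forall X : Ob, Mor X X;
  shift : Ob -> Ob;
  shiftm : forall X Y : Ob, Mor X Y -> Mor (shift X) (shift Y);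
  dist : forall X Y Z : Ob, Mor X Y -> Mor Y Z -> Mor Z (shift X) -> Prop
}.
Arguments compm {t X Y Z}.
Arguments idm {t}.
Arguments shift {t}.
Arguments shiftm {t X Y}.
Arguments dist {t X Y Z}.

Section Triangulated.
Variable C : tcat.
Local Notation Ob := (Ob C).
Local Notation Mor := (@Mor C).

Definition iso (X Y : Ob) : Prop :=
  exists (f : Mor X Y) (g : Mor Y X), compm g f = idm X /\ compm f g = idm Y.

Definition is_zero_obj (Z : Ob) : Prop := idm Z = 0.

Definition is_biprod (X Y P : Ob) (i1 : Mor X P) (i2 : Mor Y P)
    (p1 : Mor P X) (p2 : Mor P Y) : Prop :=
  [/\ compm p1 i1 = idm X, compm p2 i2 = idm Y, compm p1 i2 = 0, compm p2 i1 = 0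
    & compm i1 p1 + compm i2 p2 = idm P].

Definition additive_axioms : Prop :=
  (forall (X Y Z W : Ob) (h : Mor Z W) (g : Mor Y Z) (f : Mor X Y),
         compm h (compm g f) = compm (compm h g) f) /\
      (forall (X Y : Ob) (f : Mor X Y), compm (idm Y) f = f /\ compm f (idm X) = f) /\
      (forall (X Y Z : Ob) (g1 g2 : Mor Y Z) (f : Mor X Y),
         compm (g1 + g2) f = compm g1 f + compm g2 f) /\
      (forall (X Y Z : Ob) (g : Mor Y Z) (f1 f2 : Mor X Y),
         compm g (f1 + f2) = compm g f1 + compm g f2) /\
      (exists Z : Ob, is_zero_obj Z) /\
      (forall X Y : Ob, exists (P : Ob) (i1 : Mor X P) (i2 : Mor Y P)
         (p1 : Mor P X) (p2 : Mor P Y), is_biprod i1 i2 p1 p2).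

Definition shift_axioms : Prop :=
  (forall X : Ob, shiftm (idm X) = idm (shift X)) /\
      (forall (X Y Z : Ob) (g : Mor Y Z) (f : Mor X Y),
         shiftm (compm g f) = compm (shiftm g) (shiftm f)) /\
      (forall (X Y : Ob) (f g : Mor X Y), shiftm (f + g) = shiftm f + shiftm g) /\
      (forall (X Y : Ob) (f g : Mor X Y), shiftm f = shiftm g -> f = g) /\
      (forall (X Y : Ob) (h : Mor (shift X) (shift Y)), exists f : Mor X Y, shiftm f = h) /\
  (forall Y : Ob, exists X : Ob, iso (shift X) Y).

Definition TR0 : Prop :=
  forall (X Y Z X' Y' Z' : Ob) (u : Mor X Y) (v : Mor Y Z) (w : Mor Z (shift X))
    (u' : Mor X' Y') (v' : Mor Y' Z') (w' : Mor Z' (shift X'))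
    (a : Mor X X') (b : Mor Y Y') (c : Mor Z Z')
    (a' : Mor X' X) (b' : Mor Y' Y) (c' : Mor Z' Z),
    compm a' a = idm X -> compm a a' = idm X' ->
    compm b' b = idm Y -> compm b b' = idm Y' ->
    compm c' c = idm Z -> compm c c' = idm Z' ->
    compm b u = compm u' a -> compm c v = compm v' b -> compm (shiftm a) w = compm w' c ->
    dist u v w -> dist u' v' w'.

Definition TR1 : Prop :=
  (forall (X Z : Ob), is_zero_obj Z ->
     dist (idm X) (0 : Mor X Z) (0 : Mor Z (shift X))) /\
  (forall (X Y : Ob) (u : Mor X Y), exists (Z : Ob) (v : Mor Y Z) (w : Mor Z (shift X)),
     dist u v w).

Definition TR2 : Prop :=
  forall (X Y Z : Ob) (u : Mor X Y) (v : Mor Y Z) (w : Mor Z (shift X)),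
    dist u v w <-> dist v w (- shiftm u).

Definition TR3 : Prop :=
  forall (X Y Z X' Y' Z' : Ob) (u : Mor X Y) (v : Mor Y Z) (w : Mor Z (shift X))
    (u' : Mor X' Y') (v' : Mor Y' Z') (w' : Mor Z' (shift X'))
    (a : Mor X X') (b : Mor Y Y'),
    dist u v w -> dist u' v' w' -> compm b u = compm u' a ->
    exists c : Mor Z Z', compm c v = compm v' b /\ compm (shiftm a) w = compm w' c.

Definition TR4 : Prop :=
  forall (X Y Z Z' X' Y' : Ob) (u : Mor X Y) (v : Mor Y Z)
    (j : Mor Y Z') (k : Mor Z' (shift X))
    (l : Mor Z X') (i : Mor X' (shift Y))
    (m : Mor Z Y') (n : Mor Y' (shift X)),
    dist u j k -> dist v l i -> dist (compm v u) m n ->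
    exists (f : Mor Z' Y') (g : Mor Y' X'),
      [/\ dist f g (compm (shiftm j) i), compm m v = compm f j, compm n f = k,
          compm g m = l & compm i g = compm (shiftm u) n].

Definition triangulated : Prop :=
  [/\ additive_axioms, shift_axioms, TR0, TR1 & TR2] /\ TR3 /\ TR4.

Definition subcat (P : Ob -> Prop) : Prop :=
  [/\ (forall Z : Ob, is_zero_obj Z -> P Z),
      (forall (X Y B : Ob) (i1 : Mor X B) (i2 : Mor Y B) (p1 : Mor B X) (p2 : Mor B Y),
         is_biprod i1 i2 p1 p2 -> P X -> P Y -> P B),
      (forall X Y : Ob, iso X Y -> P X -> P Y)
    & (forall (X Y B : Ob) (i1 : Mor X B) (i2 : Mor Y B) (p1 : Mor B X) (p2 : Mor B Y),
         is_biprod i1 i2 p1 p2 -> P B -> P X)].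

(* P[1] and P[-1] (as iso-closed subcategories) *)
Definition shift_sub (P : Ob -> Prop) : Ob -> Prop :=
  fun N => exists V : Ob, P V /\ iso N (shift V).
Definition unshift_sub (P : Ob -> Prop) : Ob -> Prop :=
  fun M => P (shift M).

Definition Ext1_zero (P Q : Ob -> Prop) : Prop :=
  forall X Y : Ob, P X -> Q Y -> forall f : Mor X (shift Y), f = 0.

Definition star (P Q : Ob -> Prop) : Ob -> Prop :=
  fun X => exists (M N : Ob) (u : Mor M X) (v : Mor X N) (w : Mor N (shift M)),
    [/\ P M, Q N & dist u v w].

Definition cotorsion_pair (U V : Ob -> Prop) : Prop :=
  [/\ subcat U, subcat V, Ext1_zero U V & forall X : Ob, star U (shift_sub V) X].

Definition twin_cotorsion_pair (S T U V : Ob -> Prop) : Prop :=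
  [/\ cotorsion_pair S T, cotorsion_pair U V & Ext1_zero S V].

Section Heart.
Variables S T U V : Ob -> Prop.

Definition Wsub : Ob -> Prop := fun X => T X /\ U X.
Definition Cminus : Ob -> Prop := star (unshift_sub S) Wsub.
Definition Cplus : Ob -> Prop := star Wsub (shift_sub V).
Definition Hsub : Ob -> Prop := fun X => Cplus X /\ Cminus X.

Definition factors_W (X Y : Ob) (f : Mor X Y) : Prop :=
  exists (W : Ob) (a : Mor X W) (b : Mor W Y), Wsub W /\ f = compm b a.

(* equality in the ideal quotient H/[W] *)
Definition eqW (X Y : Ob) (f g : Mor X Y) : Prop := factors_W (f - g).

Definition isoW (X Y : Ob) (e : Mor X Y) : Prop :=
  exists e' : Mor Y X, eqW (compm e' e) (idm X) /\ eqW (compm e e') (idm Y).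

Definition is_cokernelW (A B Cc : Ob) (f : Mor A B) (beta : Mor B Cc) : Prop :=
  [/\ eqW (compm beta f) 0
    & forall (D : Ob) (h : Mor B D), Hsub D -> eqW (compm h f) 0 ->
        (exists h' : Mor Cc D, eqW (compm h' beta) h) /\
        (forall h1 h2 : Mor Cc D, eqW (compm h1 beta) h ->
           eqW (compm h2 beta) h -> eqW h1 h2)].

End Heart.
End Triangulated.

(* Main.v *)
Require Import Defs.
From mathcomp Require Import all_boot all_algebra.
Import GRing.Theory.
Local Open Scope ring_scope.
Set Implicit Arguments. Unset Strict Implicit.

Section Tri.
Variable C : tcat.
Hypothesis HC : triangulated C.
Local Notation Ob := (Ob C).
Local Notation Mor := (@Mor C).

Lemma cA (X Y Z W : Ob) (h : Mor Z W) (g : Mor Y Z) (f : Mor X Y) :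
  compm h (compm g f) = compm (compm h g) f.
Proof. by case: HC => [[[H _] _ _ _ _] _]; apply: H. Qed.
Lemma c1l (X Y : Ob) (f : Mor X Y) : compm (idm Y) f = f.
Proof. by case: HC => [[[_ [H _]] _ _ _ _] _]; case: (H _ _ f). Qed.
Lemma c1r (X Y : Ob) (f : Mor X Y) : compm f (idm X) = f.
Proof. by case: HC => [[[_ [H _]] _ _ _ _] _]; case: (H _ _ f). Qed.
Lemma cDl (X Y Z : Ob) (g1 g2 : Mor Y Z) (f : Mor X Y) :
  compm (g1 + g2) f = compm g1 f + compm g2 f.
Proof. by case: HC => [[[_ [_ [H _]]] _ _ _ _] _]; apply: H. Qed.
Lemma cDr (X Y Z : Ob) (g : Mor Y Z) (f1 f2 : Mor X Y) :
  compm g (f1 + f2) = compm g f1 + compm g f2.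
Proof. by case: HC => [[[_ [_ [_ [H _]]]] _ _ _ _] _]; apply: H. Qed.
Lemma zex : exists Z : Ob, is_zero_obj Z.
Proof. by case: HC => [[[_ [_ [_ [_ [H _]]]]] _ _ _ _] _]. Qed.
Lemma bpex (X Y : Ob) : exists (P : Ob) (i1 : Mor X P) (i2 : Mor Y P)
         (p1 : Mor P X) (p2 : Mor P Y), is_biprod i1 i2 p1 p2.
Proof. by case: HC => [[[_ [_ [_ [_ [_ H]]]]] _ _ _ _] _]. Qed.
Lemma sh1 (X : Ob) : shiftm (idm X) = idm (shift X).
Proof. by case: HC => [[_ [H _] _ _ _] _]. Qed.
Lemma shc (X Y Z : Ob) (g : Mor Y Z) (f : Mor X Y) :
  shiftm (compm g f) = compm (shiftm g) (shiftm f).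
Proof. by case: HC => [[_ [_ [H _]] _ _ _] _]. Qed.
Lemma shD (X Y : Ob) (f g : Mor X Y) : shiftm (f + g) = shiftm f + shiftm g.
Proof. by case: HC => [[_ [_ [_ [H _]]] _ _ _] _]. Qed.
Lemma shinj (X Y : Ob) (f g : Mor X Y) : shiftm f = shiftm g -> f = g.
Proof. by case: HC => [[_ [_ [_ [_ [H _]]]] _ _ _] _]; apply: H. Qed.
Lemma shfull (X Y : Ob) (h : Mor (shift X) (shift Y)) : exists f : Mor X Y, shiftm f = h.
Proof. by case: HC => [[_ [_ [_ [_ [_ [H _]]]]] _ _ _] _]. Qed.
Lemma shess (Y : Ob) : exists X : Ob, iso (shift X) Y.
Proof. by case: HC => [[_ [_ [_ [_ [_ [_ H]]]]] _ _ _] _]. Qed.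
Lemma tr0 : TR0 C.
Proof. by case: HC => [[_ _ H _ _] _]. Qed.
Lemma tr1a (X Z : Ob) : is_zero_obj Z -> dist (idm X) (0 : Mor X Z) (0 : Mor Z (shift X)).
Proof. by case: HC => [[_ _ _ [H _] _] _]; apply: H. Qed.
Lemma tr1b (X Y : Ob) (u : Mor X Y) :
  exists (Z : Ob) (v : Mor Y Z) (w : Mor Z (shift X)), dist u v w.
Proof. by case: HC => [[_ _ _ [_ H] _] _]. Qed.
Lemma tr2 (X Y Z : Ob) (u : Mor X Y) (v : Mor Y Z) (w : Mor Z (shift X)) :
    dist u v w <-> dist v w (- shiftm u).
Proof. by case: HC => [[_ _ _ _ H] _]. Qed.
Lemma tr3 : TR3 C.
Proof. by case: HC => [_ [H _]]. Qed.
Lemma tr4 : TR4 C.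
Proof. by case: HC => [_ [_ H]]. Qed.

Lemma c0l (X Y Z : Ob) (f : Mor X Y) : compm (0 : Mor Y Z) f = 0.
Proof. have h := cDl (0 : Mor Y Z) 0 f. rewrite addr0 in h.
apply: (addrI (compm (0 : Mor Y Z) f)). by rewrite addr0 -h. Qed.
Lemma c0r (X Y Z : Ob) (g : Mor Y Z) : compm g (0 : Mor X Y) = 0.
Proof. have h := cDr g (0 : Mor X Y) 0. rewrite addr0 in h.
apply: (addrI (compm g (0 : Mor X Y))). by rewrite addr0 -h. Qed.
Lemma cNl (X Y Z : Ob) (g : Mor Y Z) (f : Mor X Y) : compm (- g) f = - compm g f.
Proof. apply: (addrI (compm g f)). by rewrite -cDl !subrr c0l. Qed.
Lemma cNr (X Y Z : Ob) (g : Mor Y Z) (f : Mor X Y) : compm g (- f) = - compm g f.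
Proof. apply: (addrI (compm g f)). by rewrite -cDr !subrr c0r. Qed.
Lemma cBl (X Y Z : Ob) (g1 g2 : Mor Y Z) (f : Mor X Y) :
  compm (g1 - g2) f = compm g1 f - compm g2 f.
Proof. by rewrite cDl cNl. Qed.
Lemma cBr (X Y Z : Ob) (g : Mor Y Z) (f1 f2 : Mor X Y) :
  compm g (f1 - f2) = compm g f1 - compm g f2.
Proof. by rewrite cDr cNr. Qed.
Lemma sh0 (X Y : Ob) : shiftm (0 : Mor X Y) = 0.
Proof. have h := shD (0 : Mor X Y) 0. rewrite addr0 in h.
apply: (addrI (shiftm (0 : Mor X Y))). by rewrite addr0 -h. Qed.
Lemma shN (X Y : Ob) (f : Mor X Y) : shiftm (- f) = - shiftm f.
Proof. apply: (addrI (shiftm f)). by rewrite -shD !subrr sh0. Qed.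

Lemma zfrom (Z Y : Ob) (f : Mor Z Y) : is_zero_obj Z -> f = 0.
Proof. move=> hz; by rewrite -(c1r f) hz c0r. Qed.
Lemma zto (Z Y : Ob) (f : Mor Y Z) : is_zero_obj Z -> f = 0.
Proof. move=> hz; by rewrite -(c1l f) hz c0l. Qed.
Lemma zsh (Z : Ob) : is_zero_obj Z -> is_zero_obj (shift Z).
Proof. move=> hz; by rewrite /is_zero_obj -sh1 hz sh0. Qed.

Lemma tri0id (Z D : Ob) : is_zero_obj Z ->
  dist (0 : Mor Z D) (idm D) (0 : Mor D (shift Z)).
Proof. move=> hz. apply/tr2. rewrite sh0 oppr0. by apply: tr1a; apply: zsh. Qed.

Lemma trv (X Y Z : Ob) (u : Mor X Y) (v : Mor Y Z) (w : Mor Z (shift X)) :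
  dist u v w -> compm v u = 0.
Proof.
move=> hd. have [Z0 hz] := zex.
have [c [h1 _]] := tr3 (tr1a X hz) hd (a := idm X) (b := u) (erefl _).
by rewrite -h1 c0r.
Qed.

Lemma trw (X Y Z : Ob) (u : Mor X Y) (v : Mor Y Z) (w : Mor Z (shift X)) :
  dist u v w -> compm w v = 0.
Proof. move=> /tr2; apply: trv. Qed.

Lemma L1 (X Y Z D : Ob) (u : Mor X Y) (v : Mor Y Z) (w : Mor Z (shift X))
  (h : Mor Y D) : dist u v w -> compm h u = 0 -> exists c : Mor Z D, h = compm c v.
Proof.
move=> hd hu. have [Z0 hz] := zex.
have hu' : compm h u = compm (0 : Mor Z0 D) (0 : Mor X Z0) by rewrite c0l.
have [c [h1 _]] := tr3 hd (tri0id D hz) hu'.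
exists c. by rewrite h1 c1l.
Qed.

Lemma L2 (X Y Z D : Ob) (u : Mor X Y) (v : Mor Y Z) (w : Mor Z (shift X))
  (h : Mor D Y) : dist u v w -> compm v h = 0 -> exists c : Mor D X, h = compm u c.
Proof.
move=> hd hv. have [Z0 hz] := zex.
have hs : dist (0 : Mor D Z0) (0 : Mor Z0 (shift D)) (- shiftm (idm D)).
  by have := tr1a D hz; move/tr2.
have hd' : dist v w (- shiftm u) by move/tr2: hd.
have hv' : compm (0 : Mor Z0 Z) (0 : Mor D Z0) = compm v h by rewrite c0l.
have [c [_ h2]] := tr3 hs hd' hv'.
have [c0 hc0] := shfull c.
exists c0. apply: shinj. rewrite shc hc0.
move: h2; rewrite cNr cNl sh1 c1r => /oppr_inj.
done.
Qed.


Lemma iso_sym (X Y : Ob) : iso X Y -> iso Y X.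
Proof. by case=> f [g [h1 h2]]; exists g, f. Qed.

Lemma transp (X Y Z X' Z' : Ob) (u : Mor X Y) (v : Mor Y Z) (w : Mor Z (shift X))
  (ix : Mor X X') (jx : Mor X' X) (iz : Mor Z Z') (jz : Mor Z' Z) :
  compm jx ix = idm X -> compm ix jx = idm X' -> compm jz iz = idm Z -> compm iz jz = idm Z' ->
  dist u v w -> dist (compm u jx) (compm iz v) (compm (compm (shiftm ix) w) jz).
Proof.
move=> h1 h2 h3 h4 hd.
apply: (tr0 (a := ix) (b := idm Y) (c := iz) (a' := jx) (b' := idm Y) (c' := jz)) hd => //.
- by rewrite c1l.
- by rewrite c1l.
- by rewrite c1l -cA h1 c1r.
- by rewrite c1r.
- by rewrite -cA h3 c1r.
Qed.

Lemma unshift (K Y T0 : Ob) (a : Mor (shift K) (shift Y)) (b : Mor (shift Y) (shift T0))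
  (c : Mor (shift T0) (shift (shift K))) : dist a b c ->
  exists (k : Mor K Y) (p : Mor Y T0) (r : Mor T0 (shift K)), dist k p r.
Proof.
move=> hd.
have [c0 hc0] := shfull c. have [b0 hb0] := shfull b. have [a0 ha0] := shfull a.
have h1 : dist (- c0) a b by apply/tr2; rewrite shN opprK hc0.
have h2 : dist (- b0) (- c0) a by apply/tr2; rewrite shN opprK hb0.
have h3 : dist (- a0) (- b0) (- c0) by apply/tr2; rewrite shN opprK ha0.
by exists (- a0), (- b0), (- c0).
Qed.

Lemma split_summand (P : Ob -> Prop) (X M : Ob) (f : Mor X M) (r : Mor M X) :
  subcat P -> compm r f = idm X -> P M -> P X.
Proof.
move=> [_ _ _ hsum] hrf hM.
have [E [d [e hd]]] := tr1b f.
have hd' : dist d e (- shiftm f) by move/tr2: hd.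
have hd'' : dist e (- shiftm f) (- shiftm d) by move/tr2: hd'.
have he : e = 0.
  have := trv hd''.
  rewrite cNl => /eqP; rewrite oppr_eq0 => /eqP he.
  by rewrite -[e]c1l -sh1 -hrf shc -cA he c0r.
have [d' hd'd] : exists d' : Mor E M, idm E = compm d d'.
  by apply: (L2 hd'); rewrite he c0l.
have [psi hpsi] : exists psi : Mor E M, idm M - compm f r = compm psi d.
  apply: (L1 hd). by rewrite cBl c1l -cA hrf c1r subrr.
have hdf : compm d f = 0 by apply: (trv hd).
apply: (hsum X E M f (d' - compm f (compm r d')) r d) hM.
split.
- done.
- by rewrite cBr cA cA hdf !c0l subr0.
- by rewrite cBr cA hrf c1l subrr.
- exact: hdf.
- have key : compm (idm M - compm f r) (idm M - compm d' d) = 0.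
    by rewrite hpsi -cA cBr c1r cA -hd'd c1l subrr c0r.
  move: key; rewrite cBr c1r cBl c1l => /eqP; rewrite subr_eq0 => /eqP key.
  have e1 : compm (compm f (compm r d')) d = compm (compm f r) (compm d' d) by rewrite !cA.
  by rewrite cBl e1 -key addrC subrK.
Qed.

Lemma ext_shiftsub (P Q : Ob -> Prop) (X N : Ob) : Ext1_zero P Q -> P X -> shift_sub Q N ->
  forall phi : Mor X N, phi = 0.
Proof.
move=> hE hX [V0 [hV [i [j [h1 h2]]]]] phi.
by rewrite -[phi]c1l -h1 -cA (hE _ _ hX hV (compm i phi)) c0r.
Qed.

Lemma ext_unshift (P Q : Ob -> Prop) (K Y : Ob) : Ext1_zero P Q -> P (shift K) -> Q Y ->
  forall l : Mor K Y, l = 0.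
Proof.
move=> hE hK hY l. apply: shinj. rewrite sh0. exact: hE.
Qed.

Lemma iso_closed (P : Ob -> Prop) (X Y : Ob) : subcat P -> iso X Y -> P X -> P Y.
Proof. by case=> _ _ H _; apply: H. Qed.

Section Cot.
Variables P Q : Ob -> Prop.
Hypothesis hPQ : cotorsion_pair P Q.

Lemma decP (Y : Ob) : exists (M N : Ob) (u : Mor M Y) (v : Mor Y N) (w : Mor N (shift M)),
  [/\ P M, shift_sub Q N & dist u v w].
Proof. by case: hPQ => _ _ _ H; apply: H. Qed.

Lemma decQ (Y : Ob) : exists (K T0 : Ob) (k : Mor K Y) (p : Mor Y T0) (r : Mor T0 (shift K)),
  [/\ P (shift K), Q T0 & dist k p r].
Proof.
have [M [N [u [v [w [hM [V0 [hV [fN [gN [hN1 hN2]]]]] hd]]]]]] := decP (shift Y).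
have [K hK] := shess M.
have hK' := hK; case: hK' => [i0 [j0 [hi1 hi2]]].
have hd2 := transp hi2 hi1 hN1 hN2 hd.
have [k [p [r hd3]]] := unshift hd2.
exists K, V0, k, p, r; split => //.
case: hPQ => hP _ _ _. apply: iso_closed hP (iso_sym hK) hM.
Qed.

Lemma charP (X : Ob) : (forall Q0 : Ob, Q Q0 -> forall phi : Mor X (shift Q0), phi = 0) -> P X.
Proof.
move=> H.
have [M [N [u [v [w [hM [V0 [hV [fN [gN [hN1 hN2]]]]] hd]]]]]] := decP X.
have hv : v = 0 by rewrite -[v]c1l -hN1 -cA (H _ hV (compm fN v)) c0r.
have [c hc] : exists c : Mor X M, idm X = compm u c by apply: (L2 hd); rewrite hv c0l.
case: hPQ => hP _ _ _.
exact: (split_summand hP (esym hc) hM).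
Qed.

Lemma charQ (Y : Ob) : (forall P0 : Ob, P P0 -> forall phi : Mor P0 (shift Y), phi = 0) -> Q Y.
Proof.
move=> H.
have [K [T0 [k [p [r [hK hT hd]]]]]] := decQ Y.
have hk : k = 0 by apply: shinj; rewrite sh0; apply: H.
have [c hc] : exists c : Mor T0 Y, idm Y = compm c p by apply: (L1 hd); rewrite hk c0r.
case: hPQ => _ hQ _ _.
exact: (split_summand hQ (esym hc) hT).
Qed.

End Cot.

Lemma unrot (Y Z Y' : Ob) (v : Mor Y Z) (w : Mor Z Y') (n : Mor Y' (shift Y)) :
  dist v w n -> exists (X : Ob) (s : Mor X Y) (h : Mor Z (shift X)), iso (shift X) Y' /\ dist s v h.
Proof.
move=> hd.
have [X hX] := shess Y'.
have hX' := hX; case: hX' => [i0 [j0 [h1 h2]]].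
have hd2 := transp (c1l (idm Y)) (c1l (idm Y)) h2 h1 hd.
rewrite c1r sh1 c1l in hd2.
have [s hs] := shfull (- compm n i0).
exists X, s, (compm j0 w); split => //.
apply/tr2. by rewrite hs opprK.
Qed.

Section Main.
Variables S T U V : Ob -> Prop.
Hypothesis Htw : twin_cotorsion_pair S T U V.

Local Notation W := (Wsub T U).

Lemma W_zero (Z : Ob) : is_zero_obj Z -> W Z.
Proof.
case: Htw => [[_ hT _ _] [hU _ _ _] _] hz.
by case: hT => H _ _ _; case: hU => H' _ _ _; split; [apply: H | apply: H'].
Qed.

Lemma fW0 (X Y : Ob) : factors_W T U (0 : Mor X Y).
Proof.
have [Z hz] := zex.
exists Z, 0, 0; split; first exact: W_zero.
by rewrite c0l.
Qed.

Lemma fWl (X Y Y' : Ob) (f : Mor X Y) (g : Mor Y Y') : factors_W T U f -> factors_W T U (compm g f).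
Proof. case=> [W0 [a [b [hW ->]]]]. exists W0, a, (compm g b); split => //. by rewrite cA. Qed.

Lemma fWr (X' X Y : Ob) (f : Mor X Y) (g : Mor X' X) : factors_W T U f -> factors_W T U (compm f g).
Proof. case=> [W0 [a [b [hW ->]]]]. exists W0, (compm a g), b; split => //. by rewrite cA. Qed.

Lemma fWD (X Y : Ob) (f1 f2 : Mor X Y) : factors_W T U f1 -> factors_W T U f2 -> factors_W T U (f1 + f2).
Proof.
case=> [W1 [a1 [b1 [hW1 ->]]]] [W2 [a2 [b2 [hW2 ->]]]].
have [P [i1 [i2 [p1 [p2 hb]]]]] := bpex W1 W2.
exists P, (compm i1 a1 + compm i2 a2), (compm b1 p1 + compm b2 p2); split.
  case: Htw => [[_ hT _ _] [hU _ _ _] _].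
  case: hW1 => ht1 hu1; case: hW2 => ht2 hu2.
  split; [case: hT => _ H _ _; exact: H hb ht1 ht2 | case: hU => _ H _ _; exact: H hb hu1 hu2].
case: hb => e11 e22 e12 e21 _.
rewrite cDr !cDl -!cA !(cA p1) !(cA p2) e11 e22 e12 e21 !c1l !c0l !c0r.
by rewrite addr0 add0r.
Qed.


Definition Neg (Y : Ob) := forall V0 : Ob, V V0 -> forall chi : Mor Y (shift V0),
  (forall K : Ob, S (shift K) -> forall l : Mor K Y, compm chi l = 0) -> chi = 0.

Lemma Cminus_Neg (Y : Ob) : Cminus S T U Y -> Neg Y.
Proof.
case=> [M [W0 [m [a [w [hM [_ hWU] hd]]]]]] V0 hV0 chi hchi.
case: Htw => [_ [_ _ hUV _] _].
have [c ->] := L1 hd (hchi _ hM m).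
by rewrite (hUV _ _ hWU hV0 c) c0l.
Qed.

Lemma Neg_Cminus (Y : Ob) : Neg Y -> Cminus S T U Y.
Proof.
move=> hN.
have hcST : cotorsion_pair S T by case: Htw.
have hcUV : cotorsion_pair U V by case: Htw.
have [_ _ hST _] := hcST.
have hSV : Ext1_zero S V by case: Htw.
have [K [T3 [k [p [r [hK hT3 hd]]]]]] := decQ hcST Y.
exists K, T3, k, p, r; split => //; split => //.
apply: (charP hcUV) => V0 hV0 phi.
have h0 : compm phi p = 0.
  apply: hN => // K' hK' l.
  by rewrite -cA (ext_unshift hST hK' hT3 (compm p l)) c0r.
have hd' : dist p r (- shiftm k) by move/tr2: hd.
have [c ->] := L1 hd' h0.
by rewrite (hSV _ _ hK hV0 c) c0l.
Qed.


Lemma main (A B Cc : Ob)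
  (HA : Hsub S T U V A) (HB : Hsub S T U V B) (HCc : Hsub S T U V Cc)
  (f : Mor A B) (beta : Mor B Cc)
  (Hcok : is_cokernelW S T U V f beta) :
  exists (C' : Ob) (g : Mor B C') (eta : Mor Cc C'),
    [/\ Hsub S T U V C',
        isoW T U eta,
        eqW T U (compm eta beta) g
      & exists (X : Ob) (s : Mor X B) (h : Mor C' (shift X)),
          S (shift X) /\ dist s g h].
Proof.
have hcST : cotorsion_pair S T by case: Htw.
have hcUV : cotorsion_pair U V by case: Htw.
have hSV : Ext1_zero S V by case: Htw.
have [hS hT hST _] := hcST.
have [hU hV hUV _] := hcUV.
case: HA => _ [XA [WA [x [a [w [hXA hWA hdA]]]]]].
have [Z [z [e hdz]]] := tr1b (compm f x).
have [UZ [NZ [i [iv [ic [hUZ hNZ hdi]]]]]] := decP hcUV Z.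
have [K2 [T0 [k2 [b' [u' [hK2 hT0 hdk]]]]]] := decQ hcST UZ.
have [C' [q [r hdj]]] := tr1b (compm i k2).
have hWT0 : W T0.
  split => //. apply: (charP hcUV) => V1 hV1 phi.
  have hdk' : dist b' u' (- shiftm k2) by move/tr2: hdk.
  have [c ->] := L1 hdk' (hUV _ _ hUZ hV1 (compm phi b')).
  by rewrite (hSV _ _ hK2 hV1 c) c0l.
have [f1 [g1 [hd1 _ _ _ _]]] := tr4 hdk hdi hdj.
have hCp : Cplus T U V C'.
  by exists T0, NZ, f1, g1; eexists; split; [exact: hWT0 | exact: hNZ | exact: hd1].
have hdz' : dist z e (- shiftm (compm f x)) by move/tr2: hdz.
have hdj' : dist q r (- shiftm (compm i k2)) by move/tr2: hdj.
have [Y' [m [n hdg]]] := tr1b (compm q z).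
have [f2 [g2 [hd2 _ _ _ _]]] := tr4 hdz' hdj' hdg.
have hSY : S Y'.
  apply: (charP hcST) => T1 hT1 phi.
  have [c ->] := L1 hd2 (hST _ _ hXA hT1 (compm phi f2)).
  by rewrite (hST _ _ hK2 hT1 c) c0l.
have [X [s' [h [hXY hdg']]]] := unrot hdg.
have hSX : S (shift X) := iso_closed hS (iso_sym hXY) hSY.
have hdg'' : dist (compm q z) h (- shiftm s') by move/tr2: hdg'.
have hCm : Cminus S T U C'.
  apply: Neg_Cminus => V1 hV1 chi hchi.
  have h0 : compm chi (compm q z) = 0.
    apply: (Cminus_Neg HB.2) => // K hK l. by rewrite -cA hchi.
  have [c ->] := L1 hdg'' h0.
  by rewrite (hSV _ _ hSX hV1 c) c0l.
have hP2 : eqW T U (compm (compm q z) f) 0.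
  rewrite /eqW subr0.
  have h0 : compm (compm (compm q z) f) x = 0 by rewrite -cA -cA (trv hdz) c0r.
  have [c ->] := L1 hdA h0. by exists WA, a, c; split.
have hP3 : forall (D : Ob) (hD : Hsub S T U V D) (k0 : Mor B D), eqW T U (compm k0 f) 0 ->
    exists k' : Mor C' D, k0 = compm k' (compm q z).
  move=> D [[WD [ND [al [be [ga [hWD hND hdD]]]]]] _] k0.
  rewrite /eqW subr0 => [[W0 [a0 [b0 [[hW0T _] hk]]]]].
  have h1 : compm k0 (compm f x) = 0.
    by rewrite cA hk -cA (ext_unshift hST hXA hW0T (compm a0 x)) c0r.
  have [kk hkk] := L1 hdz h1.
  have h2 : compm be (compm kk i) = 0 := ext_shiftsub hUV hUZ hND _.
  have [t ht] := L2 hdD h2.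
  have h3 : compm kk (compm i k2) = 0.
    by rewrite cA ht -cA (ext_unshift hST hK2 hWD.1 (compm t k2)) c0r.
  have [k' hk'] := L1 hdj h3.
  exists k'. by rewrite hkk hk' -cA.
have hP4 : forall (h1 : Mor C' C'), factors_W T U (compm h1 (compm q z)) -> factors_W T U h1.
  move=> h1 [W1 [a1 [b1 [[hW1T hW1U] hh]]]].
  have ha : compm a1 s' = 0 := ext_unshift hST hSX hW1T _.
  have [a' ha'] := L1 hdg' ha.
  have h0 : compm (h1 - compm b1 a') (compm q z) = 0 by rewrite cBl hh ha' -cA subrr.
  have [psi hpsi] := L1 hdg'' h0.
  case: hCp => [WD [ND [al [be [ga [hWD hND hdD]]]]]].
  have h2 : compm be psi = 0 := ext_shiftsub hSV hSX hND _.
  have [t ht] := L2 hdD h2.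
  have -> : h1 = compm b1 a' + compm (compm al t) h by rewrite -ht -hpsi addrC subrK.
  apply: fWD; first by exists W1, a', b1.
  by exists WD, (compm t h), al; split => //; rewrite cA.
case: Hcok => hbf huniv.
have [[eta heta] _] := huniv C' (compm q z) (conj hCp hCm) hP2.
have [eps heps] := hP3 Cc HCc beta hbf.
exists C', (compm q z), eta; split.
- by split.
- exists eps; split.
  + have [_ uniq] := huniv Cc beta HCc hbf.
    apply: uniq.
    * rewrite /eqW.
      have ee : compm eps (compm eta beta - compm q z) = compm (compm eps eta) beta - beta.
        by rewrite cBr cA -heps.
      rewrite -ee; exact: fWl heta.
    * rewrite /eqW c1l subrr; exact: fW0.
  + rewrite /eqW. apply: hP4. rewrite cBl c1l -cA -heps. exact: heta.
- exact: heta.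
- by exists X, s', h; split.
Qed.

End Main.
End Tri.

Theorem lemma5p1 (C : tcat) (HC : triangulated C)
  (S T U V : Ob C -> Prop) (Htw : twin_cotorsion_pair S T U V)
  (A B Cc : Ob C)
  (HA : Hsub S T U V A) (HB : Hsub S T U V B) (HCc : Hsub S T U V Cc)
  (f : Mor A B) (beta : Mor B Cc)
  (Hcok : is_cokernelW S T U V f beta) :
  exists (C' : Ob C) (g : Mor B C') (eta : Mor Cc C'),
    [/\ Hsub S T U V C',
        isoW T U eta,
        eqW T U (compm eta beta) g
      & exists (X : Ob C) (s : Mor X B) (h : Mor C' (shift X)),
          S (shift X) /\ dist s g h].
Proof. exact: (main HC Htw HA HB HCc Hcok). Qed.
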